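(* Let $\mathcal{H}$ be a complex separable Hilbert space and $\mathcal{E}(\mathcal{H})$ its set of effects. The function $\mathcal{S}_1:\mathcal{E}(\mathcal{H})\to\mathbb{R}$, $$\mathcal{S}_1(A):=\bigl(\|A\|+\|I-A\|-1\bigr)-\bigl(\|A(I-A)\|+\|I-A(I-A)\|-1\bigr),$$ satisfies the requirements (S1)–(S6), i.e. it is a sharpness measure.
   Context: An effect is a selfadjoint bounded operator $A$ on $\mathcal{H}$ with $\mathbb{O}\le A\le I$; $A':=I-A$. An effect is trivial if $A=\lambda I$, $\lambda\in[0,1]$; a nontrivial projection is a projection other than $\mathbb{O},I$. Norms are operator norms. Requirements for $\mathcal{S}:\mathcal{E}(\mathcal{H})\to\mathbb{R}$: (S1) $0\le\mathcal{S}(A)\le1$; (S2) $\mathcal{S}(A)=0$ iff $A$ is trivial; (S3) $\mathcal{S}(A)=1$ iff $A$ is a nontrivial projection; (S4) $\mathcal{S}(A')=\mathcal{S}(A)$; (S5) $\mathcal{S}(CAC^{-1})=\mathcal{S}(A)$ for every invertible bounded $C$ such that $CAC^{-1}$ is an effect; (S6) $A\mapsto\mathcal{S}(A)$ is operator-norm continuous. *)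

(* Defs.v *)
From HB Require Import structures.
From mathcomp Require Import all_boot all_order all_algebra.
From mathcomp Require Import boolp classical_sets reals.
From mathcomp Require Import complex.
Set Implicit Arguments. Unset Strict Implicit. Unset Printing Implicit Defensive.
Import Order.TTheory GRing.Theory Num.Theory.
Local Open Scope ring_scope.
Local Open Scope classical_set_scope.

Section Hilbert.
Variables (R : realType) (H : lmodType R[i]) (ip : H -> H -> R[i]).

Definition is_inner_product : Prop :=
  [/\ (forall (a : R[i]) x y z, ip (a *: x + y) z = a * ip x z + ip y z),
      (forall x y, ip y x = (ip x y)^*),
      (forall x, 0 <= ip x x) &
      (forall x, ip x x = 0 -> x = 0)].

Definition hnorm (x : H) : R := Num.sqrt (complex.Re (ip x x)).

Definition hcomplete : Prop :=
  forall u : nat -> H,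
    (forall e : R, 0 < e -> exists N, forall m n, (N <= m)%N -> (N <= n)%N ->
        hnorm (u m - u n) < e) ->
    exists l, forall e : R, 0 < e -> exists N, forall n, (N <= n)%N ->
        hnorm (u n - l) < e.

Definition hseparable : Prop :=
  exists d : nat -> H, forall x (e : R), 0 < e -> exists n, hnorm (x - d n) < e.

Definition is_linear_op (T : H -> H) : Prop :=
  forall (a : R[i]) x y, T (a *: x + y) = a *: T x + T y.

Definition is_bounded_op (T : H -> H) : Prop :=
  is_linear_op T /\ exists M : R, forall x, hnorm (T x) <= M * hnorm x.

Definition opnorm (T : H -> H) : R :=
  sup [set hnorm (T x) | x in [set x | hnorm x <= 1]].

Definition selfadjoint (T : H -> H) : Prop :=
  is_bounded_op T /\ forall x y, ip (T x) y = ip x (T y).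

Definition Iop : H -> H := fun x => x.
Definition Oop : H -> H := fun _ => 0.
Definition compl_op (A : H -> H) : H -> H := fun x => x - A x.
Definition sub_op (A B : H -> H) : H -> H := fun x => A x - B x.

Definition effect (A : H -> H) : Prop :=
  selfadjoint A /\
  (forall x, 0 <= ip (A x) x) /\ (forall x, ip (A x) x <= ip x x).

Definition trivial_effect (A : H -> H) : Prop :=
  exists l : R, 0 <= l <= 1 /\ A = (fun x => (l%:C)%C *: x).

Definition projection (A : H -> H) : Prop :=
  selfadjoint A /\ A \o A = A.

Definition nontrivial_projection (A : H -> H) : Prop :=
  projection A /\ A <> Oop /\ A <> Iop.

Definition invertible_bounded (C : H -> H) (D : H -> H) : Prop :=
  [/\ is_bounded_op C, is_bounded_op D,
      (forall x, C (D x) = x) & (forall x, D (C x) = x)].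

Definition sharpness_measure (S : (H -> H) -> R) : Prop :=
  (* S1 *) (forall A, effect A -> 0 <= S A <= 1) /\
  (* S2 *) (forall A, effect A -> (S A = 0 <-> trivial_effect A)) /\
  (* S3 *) (forall A, effect A -> (S A = 1 <-> nontrivial_projection A)) /\
  (* S4 *) (forall A, effect A -> S (compl_op A) = S A) /\
  (* S5 *) (forall A C D, effect A -> invertible_bounded C D ->
               effect (C \o A \o D) -> S (C \o A \o D) = S A) /\
  (* S6 *) (forall A, effect A -> forall e : R, 0 < e -> exists2 d : R, 0 < d &
               forall B, effect B -> opnorm (sub_op A B) < d ->
                 `|S A - S B| < e).

Definition S1 (A : H -> H) : R :=
  (opnorm A + opnorm (compl_op A) - 1)
  - (opnorm (A \o compl_op A) + opnorm (compl_op (A \o compl_op A)) - 1).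

End Hilbert.

(* Main.v *)
Set Implicit Arguments. Unset Strict Implicit.
Require Import Defs.
From HB Require Import structures.
From mathcomp Require Import all_boot all_order all_algebra.
From mathcomp Require Import boolp classical_sets reals.
From mathcomp Require Import complex.
From mathcomp Require Import ring lra.
Import Order.TTheory GRing.Theory Num.Theory.
Local Open Scope ring_scope.
Local Open Scope classical_set_scope.
Section Base.
Variables (R : realType) (H : lmodType R[i]) (ip : H -> H -> R[i]).
Hypothesis Hip : is_inner_product ip.
Set Default Proof Using "Hip".

Local Notation rp x y := (complex.Re (ip x y)).
Local Notation sc t x := (((t%:C)%C : R[i]) *: x).
Local Notation hn := (hnorm ip).

Lemma ReD (a b : R[i]) : complex.Re (a + b) = complex.Re a + complex.Re b.
Proof. by case: a; case: b. Qed.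
Lemma ReN (a : R[i]) : complex.Re (- a) = - complex.Re a.
Proof. by case: a. Qed.
Lemma ReMr (t : R) (a : R[i]) : complex.Re ((t%:C)%C * a) = t * complex.Re a.
Proof. by case: a => u v /=; rewrite mul0r subr0. Qed.
Lemma ReJ (a : R[i]) : complex.Re (a^*)%C = complex.Re a.
Proof. by case: a. Qed.

Lemma ipDZl a x y z : ip (a *: x + y) z = a * ip x z + ip y z.
Proof. by case: Hip. Qed.
Lemma ipC x y : ip y x = (ip x y)^*%C.
Proof. by case: Hip. Qed.
Lemma ip_ge0 x : 0 <= ip x x.
Proof. by case: Hip. Qed.
Lemma ip_eq0 x : ip x x = 0 -> x = 0.
Proof. by case: Hip => _ _ _; apply. Qed.

Lemma ip0l z : ip 0 z = 0.
Proof.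
have := ipDZl 1 0 0 z; rewrite scaler0 addr0 mul1r => h.
have : ip 0 z + 0 = ip 0 z + ip 0 z by rewrite addr0 {1}h.
by move/addrI.
Qed.
Lemma ipDl x y z : ip (x + y) z = ip x z + ip y z.
Proof. by have := ipDZl 1 x y z; rewrite scale1r mul1r. Qed.
Lemma ipZl a x z : ip (a *: x) z = a * ip x z.
Proof. by have := ipDZl a x 0 z; rewrite addr0 ip0l addr0. Qed.

Lemma rpDl x y z : rp (x + y) z = rp x z + rp y z.
Proof. by rewrite ipDl ReD. Qed.
Lemma rpZl t x z : rp (sc t x) z = t * rp x z.
Proof. by rewrite ipZl ReMr. Qed.
Lemma rpNl x z : rp (- x) z = - rp x z.
Proof. by rewrite -scaleN1r ipZl mulN1r ReN. Qed.
Lemma rpBl x y z : rp (x - y) z = rp x z - rp y z.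
Proof. by rewrite rpDl rpNl. Qed.
Lemma rp_sym x y : rp x y = rp y x.
Proof. by rewrite ipC ReJ. Qed.
Lemma rpDr x y z : rp z (x + y) = rp z x + rp z y.
Proof. by rewrite rp_sym rpDl !(rp_sym z). Qed.
Lemma rpZr t x z : rp z (sc t x) = t * rp z x.
Proof. by rewrite rp_sym rpZl rp_sym. Qed.
Lemma rpNr x z : rp z (- x) = - rp z x.
Proof. by rewrite rp_sym rpNl rp_sym. Qed.
Lemma rpBr x y z : rp z (x - y) = rp z x - rp z y.
Proof. by rewrite rpDr rpNr. Qed.
Lemma rp0l z : rp 0 z = 0.
Proof. by rewrite ip0l. Qed.
Lemma rp0r z : rp z 0 = 0.
Proof. by rewrite rp_sym rp0l. Qed.
Lemma rp_ge0 x : 0 <= rp x x.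
Proof. by have := ip_ge0 x; rewrite lecE => /andP[]. Qed.
Lemma rp_eq0 x : rp x x = 0 -> x = 0.
Proof.
move=> h; apply: ip_eq0; have := ip_ge0 x; rewrite lecE => /andP[/eqP hi _].
by move: h hi; case: (ip x x) => u v /= -> ->.
Qed.

Lemma CS_gen (b : H -> H -> R) :
  (forall x y z, b (x + y) z = b x z + b y z) ->
  (forall t x z, b (sc t x) z = t * b x z) ->
  (forall x y, b x y = b y x) ->
  (forall x, 0 <= b x x) ->
  forall x y, b x y ^+ 2 <= b x x * b y y.
Proof.
move=> bD bZ bS b0 x y.
have bDr u v w : b w (u + v) = b w u + b w v by rewrite bS bD !(bS w).
have bZr t u w : b w (sc t u) = t * b w u by rewrite bS bZ bS.
have E t : b (x + sc t y) (x + sc t y) = b x x + 2 * t * b x y + t ^+ 2 * b y y.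
  by rewrite bD !bDr !bZ !bZr (bS y x); ring.
have hyy := b0 y.
case: (ltrP 0 (b y y)) => hy.
  have := b0 (x + sc (- (b x y / b y y)) y); rewrite E.
  set t := - (b x y / b y y) => h.
  have ht : t * b y y = - b x y by rewrite /t mulNr divfK // gt_eqF.
  nra.
have yy0 : b y y = 0 by apply/eqP; rewrite eq_le hy hyy.
rewrite yy0 mulr0.
case: (eqVneq (b x y) 0) => [->|nz]; first by rewrite expr0n.
have := b0 (x + sc (- ((b x x + 1) / (2 * b x y))) y); rewrite E yy0 mulr0 addr0.
have -> : 2 * - ((b x x + 1) / (2 * b x y)) * b x y = - (b x x + 1).
  by field; rewrite nz.
have := b0 x; lra.
Qed.

Lemma CS x y : rp x y ^+ 2 <= rp x x * rp y y.
Proof. by apply: (@CS_gen (fun u v => rp u v)); [exact: rpDl|exact: rpZl|exact: rp_sym|exact: rp_ge0]. Qed.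

Lemma hn_ge0 x : 0 <= hn x.
Proof. exact: sqrtr_ge0. Qed.
Lemma hn_sqr x : hn x ^+ 2 = rp x x.
Proof. by rewrite /hnorm sqr_sqrtr // rp_ge0. Qed.

Lemma hn_le u v c : 0 <= c -> rp u u <= c ^+ 2 * rp v v -> hn u <= c * hn v.
Proof.
move=> c0 h; rewrite /hnorm -(ger0_norm c0) -sqrtr_sqr -sqrtrM ?sqr_ge0 //.
exact: ler_wsqrtr.
Qed.

Lemma CSn x y : rp x y <= hn x * hn y.
Proof.
have h := CS x y.
have : `|rp x y| <= hn x * hn y.
  rewrite -sqrtr_sqr /hnorm -sqrtrM ?rp_ge0 //; exact: ler_wsqrtr.
by apply: le_trans; rewrite ler_norm.
Qed.

Lemma hn0 : hn 0 = 0.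
Proof. by rewrite /hnorm rp0l sqrtr0. Qed.
Lemma hn_eq0 x : hn x = 0 -> x = 0.
Proof. move=> h; apply: rp_eq0; by rewrite -hn_sqr h expr0n. Qed.

Lemma hnZ t x : hn (sc t x) = `|t| * hn x.
Proof. by rewrite /hnorm rpZl rpZr mulrA -expr2 sqrtrM ?sqr_ge0 // sqrtr_sqr. Qed.
Lemma hnN x : hn (- x) = hn x.
Proof. by rewrite /hnorm rpNl rpNr opprK. Qed.
Lemma hn_le1 u c : 0 <= c -> rp u u <= c ^+ 2 -> hn u <= c.
Proof.
move=> c0 h; rewrite /hnorm -(ger0_norm c0) -sqrtr_sqr; exact: ler_wsqrtr.
Qed.
Lemma hnD x y : hn (x + y) <= hn x + hn y.
Proof.
apply: hn_le1; first by rewrite addr_ge0 ?hn_ge0.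
rewrite rpDl !rpDr -!hn_sqr (rp_sym y x).
have := CSn x y; have := hn_ge0 x; have := hn_ge0 y; nra.
Qed.
Lemma hnB x y : hn (x - y) <= hn x + hn y.
Proof. by rewrite -(hnN y) hnD. Qed.

End Base.
Section Ops.
Variables (R : realType) (H : lmodType R[i]) (ip : H -> H -> R[i]).
Hypothesis Hip : is_inner_product ip.
Set Default Proof Using "Hip".

Local Notation rp x y := (complex.Re (ip x y)).
Local Notation sc t x := (((t%:C)%C : R[i]) *: x).
Local Notation hn := (hnorm ip).
Local Notation N := (opnorm ip).

Section Lin.
Variable T : H -> H.
Hypothesis lT : is_linear_op T.
Set Default Proof Using "Hip lT".
Lemma linD x y : T (x + y) = T x + T y.
Proof. by have := lT 1 x y; rewrite !scale1r. Qed.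
Lemma lin0 : T 0 = 0.
Proof.
have := lT 1 0 0; rewrite !scale1r !addr0 => h.
have : T 0 + 0 = T 0 + T 0 by rewrite addr0 {1}h.
by move/addrI.
Qed.
Lemma linZ a x : T (a *: x) = a *: T x.
Proof. by have := lT a x 0; rewrite !addr0 lin0 addr0. Qed.
Lemma linN x : T (- x) = - T x.
Proof. by rewrite -scaleN1r linZ scaleN1r. Qed.
Lemma linB x y : T (x - y) = T x - T y.
Proof. by rewrite linD linN. Qed.
End Lin.
Set Default Proof Using "Hip".
Arguments linD [T]. Arguments lin0 [T]. Arguments linZ [T]. Arguments linN [T]. Arguments linB [T].

Lemma lin_compl (A : H -> H) : is_linear_op A -> is_linear_op (compl_op A).
Proof.
move=> lA a x y; rewrite /compl_op (lA a x y) scalerBr opprD.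
by rewrite addrACA.
Qed.
Lemma lin_comp (A B : H -> H) : is_linear_op A -> is_linear_op B -> is_linear_op (A \o B).
Proof. by move=> lA lB a x y /=; rewrite lB lA. Qed.

Definition rsa (T : H -> H) := forall x y, rp (T x) y = rp x (T y).

Lemma rsa_compl (A : H -> H) : is_linear_op A -> rsa A -> rsa (compl_op A).
Proof. by move=> lA sA x y; rewrite /compl_op /= rpBl // rpBr // sA. Qed.
Lemma rsa_Acompl (A : H -> H) : is_linear_op A -> rsa A -> rsa (A \o compl_op A).
Proof.
move=> lA sA x y; rewrite /compl_op /= !(linB lA) rpBl // rpBr //.
by rewrite !sA.
Qed.

Lemma ball0 : [set x : H | hn x <= 1] 0.
Proof. by rewrite /= hn0. Qed.

Lemma opnorm_le (T : H -> H) c : 0 <= c -> (forall x, hn (T x) <= c * hn x) -> N T <= c.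
Proof.
move=> c0 h; rewrite /opnorm; apply: ge_sup.
  by exists (hn (T 0)); exists 0 => //; exact: ball0.
move=> _ [x hx <-]; apply: le_trans (h x) _.
by rewrite -{2}[c]mulr1 ler_wpM2l.
Qed.

Lemma bounded_hasub (T : H -> H) : is_bounded_op ip T ->
  has_ubound [set hn (T x) | x in [set x | hn x <= 1]].
Proof.
case=> _ [M hM]; exists `|M| => _ [x hx <-].
apply: le_trans (hM x) _.
move: hx => /= hx.
have h0 := hn_ge0 Hip x; have h1 := ler_norm M; have h2 := normr_ge0 M.
have : 0 <= (`|M| - M) * hn x by rewrite mulr_ge0 // subr_ge0.
have : 0 <= `|M| * (1 - hn x) by rewrite mulr_ge0 // subr_ge0.
nra.
Qed.

Lemma opnorm_ge0 (T : H -> H) : is_bounded_op ip T -> 0 <= N T.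
Proof.
move=> hT; apply: le_trans (hn_ge0 Hip (T 0)) _.
by apply: (ub_le_sup (bounded_hasub hT)); exists 0 => //; exact: ball0.
Qed.

Lemma opnorm_ub (T : H -> H) : is_bounded_op ip T -> forall x, hn (T x) <= N T * hn x.
Proof.
move=> hT x; have hub := bounded_hasub hT.
have N0 := opnorm_ge0 hT.
case: (eqVneq (hn x) 0) => [h0|nz].
  by rewrite (hn_eq0 Hip h0) (lin0 hT.1) hn0 // mulr0.
have hp : 0 < hn x by rewrite lt_def nz hn_ge0.
set y := sc (hn x)^-1 x.
have hy : hn y = 1 by rewrite /y hnZ // ger0_norm ?invr_ge0 ?hn_ge0 // mulVf.
have hyb : [set x : H | hn x <= 1] y by rewrite /= hy.
have := ub_le_sup hub (ex_intro2 _ _ y hyb erefl).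
rewrite /y (linZ hT.1) hnZ // ger0_norm ?invr_ge0 ?hn_ge0 //.
by rewrite -ler_pdivrMr // mulrC.
Qed.

Definition psd (T : H -> H) (c : R) :=
  [/\ is_linear_op T, rsa T, 0 <= c & forall x, 0 <= rp (T x) x <= c * rp x x].

Lemma psd_sq T c : psd T c -> forall x, rp (T x) (T x) <= c * rp (T x) x.
Proof.
case=> lT sT c0 hq x.
have h := CS_gen Hip (b := fun u v => rp (T u) v).
have bD u v w : rp (T (u + v)) w = rp (T u) w + rp (T v) w.
  by rewrite (linD lT) (rpDl Hip).
have bZ t u w : rp (T (sc t u)) w = t * rp (T u) w.
  by rewrite (linZ lT) (rpZl Hip).
have bS u v : rp (T u) v = rp (T v) u by rewrite sT (rp_sym Hip).
have := h bD bZ bS (fun u => (andP (hq u)).1) x (T x).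
have := hq (T x); have := hq x.
have := rp_ge0 Hip (T x).
set s := rp (T x) (T x); set q := rp (T x) x.
move=> s0 /andP[q0 _] /andP[_ h2] h3.
have h4 : s ^+ 2 <= q * (c * s).
  apply: le_trans h3 _; rewrite ler_wpM2l //.
have hcq : 0 <= c * q by rewrite mulr_ge0.
nra.
Qed.

Lemma psd_bounded T c : psd T c -> is_bounded_op ip T.
Proof.
move=> hT; have := hT; case=> lT sT c0 hq; split => //; exists c => x.
apply: hn_le => //; apply: le_trans (psd_sq hT x) _.
have /andP[_ h] := hq x; rewrite expr2 -mulrA ler_wpM2l //.
Qed.

Lemma psd_norm_le T c : psd T c -> N T <= c.
Proof.
move=> hT; have := psd_bounded hT; case=> _ [M _].
have := hT; case=> lT sT c0 hq.
apply: opnorm_le => // x; apply: hn_le => //.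
apply: le_trans (psd_sq hT x) _.
have /andP[_ h] := hq x; rewrite expr2 -mulrA ler_wpM2l //.
Qed.

Lemma psd_q_le T c : psd T c -> forall x, rp (T x) x <= N T * rp x x.
Proof.
move=> hT x; have hb := psd_bounded hT.
apply: le_trans (CSn Hip (T x) x) _.
rewrite -hn_sqr // expr2 mulrA ler_wpM2r ?hn_ge0 //.
exact: opnorm_ub.
Qed.

End Ops.
Section Real.
Variable R : realType.
Set Default Proof Using "Type".
Definition ff (t : R) := t - t ^+ 2.
Definition Fmax (m M : R) :=
  if M <= 2^-1 then ff M else if 2^-1 <= m then ff m else 4^-1.
Definition Fmin (m M : R) := if ff m <= ff M then ff m else ff M.

Lemma Fmax_ub m M t : m <= t <= M -> ff t <= Fmax m M.
Proof.
move=> /andP[h1 h2]; rewrite /Fmax /ff.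
case: ifP => [/= hM|hM]; first nra.
case: ifP => [hm|hm]; first nra.
have := sqr_ge0 (t - 2^-1); nra.
Qed.

Lemma Fmax_le1 m M : 0 <= m -> m <= M -> M <= 1 -> Fmax m M <= 1.
Proof.
move=> h0 h1 h2; rewrite /Fmax /ff.
case: ifP => _; first nra; case: ifP => _; first nra; lra.
Qed.

Lemma Fmin_le m M : Fmin m M <= ff m /\ Fmin m M <= ff M.
Proof.
rewrite /Fmin; case: ifP => h; split => //.
by move/negbT: h; rewrite -ltNge => h; apply: ltW.
Qed.

Lemma Fmin_ge0 m M : 0 <= m -> m <= M -> M <= 1 -> 0 <= Fmin m M.
Proof. move=> h0 h1 h2; rewrite /Fmin /ff; case: ifP => _; nra. Qed.

Lemma Fmin_le_Fmax m M : m <= M -> Fmin m M <= Fmax m M.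
Proof.
move=> h; apply: le_trans (Fmin_le m M).1 _; apply: Fmax_ub.
by rewrite lexx h.
Qed.

Lemma Fmin_lin m M rho tau : 0 <= rho -> m * rho <= tau -> tau <= M * rho ->
  Fmin m M * rho <= (1 - m - M) * tau + m * M * rho.
Proof.
move=> h0 h1 h2; have [e1 e2] := Fmin_le m M.
case: (lerP 0 (1 - m - M)) => hc.
  apply: le_trans (_ : ff m * rho <= _); first by rewrite ler_wpM2r.
  rewrite /ff; nra.
apply: le_trans (_ : ff M * rho <= _); first by rewrite ler_wpM2r.
rewrite /ff; nra.
Qed.

Lemma Fgap m M : 0 <= m -> m < M -> M <= 1 -> Fmax m M - Fmin m M < M - m.
Proof.
move=> h0 h1 h2; rewrite /Fmin /Fmax.
case: (lerP (ff m) (ff M)) => hmin; case: (lerP M 2^-1) => hM;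
  case: (lerP 2^-1 m) => hm; rewrite /ff in hmin *; nra.
Qed.

Lemma Fgap_eq m : Fmax m m = ff m /\ Fmin m m = ff m.
Proof.
rewrite /Fmin lexx; split => //; rewrite /Fmax; case: ifP => // h1; case: ifP => // h2.
move/negbT: h1; rewrite -ltNge => h1; move/negbT: h2; rewrite -ltNge => h2.
by have := lt_trans h1 h2; rewrite ltxx.
Qed.

Lemma Fgap_le m M : 0 <= m -> m <= M -> M <= 1 -> Fmax m M - Fmin m M <= M - m.
Proof.
move=> h0 h1 h2; case: (eqVneq m M) => [<-|ne].
  by have [-> ->] := Fgap_eq m; rewrite !subrr.
by apply: ltW; apply: Fgap => //; rewrite lt_def eq_sym ne h1.
Qed.
End Real.
Section Eff.
Variables (R : realType) (H : lmodType R[i]) (ip : H -> H -> R[i]).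
Hypothesis Hip : is_inner_product ip.
Set Default Proof Using "Hip".
Local Notation rp x y := (complex.Re (ip x y)).
Local Notation sc t x := (((t%:C)%C : R[i]) *: x).
Local Notation hn := (hnorm ip).
Local Notation N := (opnorm ip).

Lemma sa_rsa (T : H -> H) : selfadjoint ip T -> rsa ip T.
Proof. by case=> _ h x y; rewrite h. Qed.

Lemma effect_psd (A : H -> H) : effect ip A -> psd ip A 1.
Proof.
case=> [[[lA _] sA] [h0 h1]]; split => //.
- by move=> x y; rewrite sA.
- move=> x; rewrite mul1r; have := h0 x; have := h1 x; rewrite !lecE /=.
  by move=> /andP[_ ->] /andP[_ ->].
Qed.

Lemma psd_relax (T : H -> H) c c' : psd ip T c -> 0 <= c' ->
  (forall x, rp (T x) x <= c' * rp x x) -> psd ip T c'.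
Proof.
case=> lT sT _ hq c0 h; split => // x; rewrite h andbT.
by have /andP[] := hq x.
Qed.

Lemma psd_compl (A : H -> H) : psd ip A 1 -> psd ip (compl_op A) 1.
Proof.
case=> lA sA _ hq; split => //.
- exact (lin_compl Hip lA).
- exact (rsa_compl Hip lA sA).
- move=> x; rewrite /compl_op /= (rpBl Hip) mul1r.
  have /andP[a b] := hq x; rewrite mul1r in b.
  by apply/andP; split; lra.
Qed.

Lemma lin_shift (A : H -> H) t : is_linear_op A -> is_linear_op (fun x => A x - sc t x).
Proof.
move=> lA a x y /=; rewrite (lA a x y) scalerDr scalerBr !scalerA mulrC.
by rewrite opprD addrACA.
Qed.

Lemma rsa_shift (A : H -> H) t : rsa ip A -> rsa ip (fun x => A x - sc t x).
Proof.
move=> sA x y /=; rewrite (rpBl Hip) (rpBr Hip) (rpZl Hip) (rpZr Hip) sA //.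
Qed.

Lemma triv_N (T : H -> H) : (forall x : H, x = 0) -> N T = 0.
Proof.
move=> ht; apply/eqP; rewrite eq_le; apply/andP; split.
  apply: (opnorm_le Hip) => // x; by rewrite (ht (T x)) (hn0 Hip) mul0r.
apply: (opnorm_ge0 Hip); split.
  by move=> a x y; rewrite (ht (T _)) (ht (_ + _)).
by exists 0 => x; rewrite (ht (T x)) (hn0 Hip) mul0r.
Qed.

Section Fixed.
Variable A : H -> H.
Hypothesis pA : psd ip A 1.
Variable e : H.
Hypothesis he : rp e e = 1.
Set Default Proof Using "Hip pA he".

Local Notation B := (A \o compl_op A).
Local Notation M := (N A).
Local Notation m := (1 - N (compl_op A)).

Lemma lA : is_linear_op A. Proof. by case: pA. Qed.
Lemma sA : rsa ip A. Proof. by case: pA. Qed.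

Lemma qA_up x : rp (A x) x <= M * rp x x.
Proof. exact (psd_q_le Hip pA x). Qed.
Lemma qA_lo x : m * rp x x <= rp (A x) x.
Proof.
have := psd_q_le Hip (psd_compl pA) x; rewrite /compl_op /= (rpBl Hip) mulrBl mul1r.
lra.
Qed.
Lemma M_le1 : M <= 1. Proof. exact (psd_norm_le Hip pA). Qed.
Lemma m_ge0 : 0 <= m.
Proof. by rewrite subr_ge0; exact (psd_norm_le Hip (psd_compl pA)). Qed.
Lemma m_le_M : m <= M.
Proof. by have := qA_lo e; have := qA_up e; rewrite he !mulr1 => h1 h2; exact: le_trans h2 h1. Qed.

Lemma qB x : rp (B x) x = rp (A x) x - rp (A x) (A x).
Proof. by rewrite /compl_op /= (linB Hip lA) (rpBl Hip) (sA (A x) x). Qed.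

Lemma qB_up x : rp (B x) x <= Fmax m M * rp x x.
Proof.
rewrite qB; have hcs := CS Hip (A x) x.
have hs := rp_ge0 Hip (A x).
have hr := rp_ge0 Hip x.
have hlo := qA_lo x; have hup := qA_up x.
set tau := rp (A x) x in hcs hlo hup *; set s := rp (A x) (A x) in hs hcs *.
set rho := rp x x in hr hcs hlo hup *.
case: (eqVneq rho 0) => [r0|rn0].
  rewrite r0 mulr0 in hcs *; nra.
have rp0 : 0 < rho by rewrite lt_def rn0 hr.
set u := tau / rho.
have etau : tau = u * rho by rewrite /u divfK.
rewrite etau in hcs hlo hup *.
have hu1 : m <= u by rewrite -(ler_pM2r rp0).
have hu2 : u <= M by rewrite -(ler_pM2r rp0).
have hF := Fmax_ub (m := m) (M := M) (t := u); rewrite hu1 hu2 /ff in hF.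
have hF' := hF isT.
have hs2 : u ^+ 2 * rho <= s.
  by rewrite -(ler_pM2r rp0) -mulrA -expr2 -exprMn.
nra.
Qed.

Lemma psd_P : psd ip (fun x => A x - sc m x) (M - m).
Proof.
split.
- exact (lin_shift _ lA).
- exact (rsa_shift _ sA).
- by rewrite subr_ge0 m_le_M.
- move=> x; rewrite (rpBl Hip) (rpZl Hip).
  have := qA_lo x; have := qA_up x; move=> h1 h2.
  apply/andP; split; nra.
Qed.

Lemma qB_lo x : Fmin m M * rp x x <= rp (B x) x.
Proof.
have hP := psd_sq Hip psd_P x; rewrite /= !(rpBl Hip) !(rpBr Hip) !(rpZl Hip) !(rpZr Hip) in hP.
rewrite (rp_sym Hip x (A x)) in hP.
rewrite qB.
have hr := rp_ge0 Hip x.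
have hl := Fmin_lin (m := m) (M := M) hr (qA_lo x) (qA_up x).
nra.
Qed.

Lemma Fmin_ge0' : 0 <= Fmin m M.
Proof. by apply: Fmin_ge0; [exact: m_ge0|exact: m_le_M|exact: M_le1]. Qed.

Lemma psdB : psd ip B (Fmax m M).
Proof.
split.
- exact (lin_comp Hip lA (lin_compl Hip lA)).
- exact (rsa_Acompl Hip lA sA).
- exact: le_trans Fmin_ge0' (Fmin_le_Fmax m_le_M).
- move=> x; rewrite qB_up andbT.
  apply: le_trans (qB_lo x); apply: mulr_ge0; [exact: Fmin_ge0'|exact: rp_ge0].
Qed.

Lemma Fmax_le1' : Fmax m M <= 1.
Proof. by apply: Fmax_le1; [exact: m_ge0|exact: m_le_M|exact: M_le1]. Qed.

Lemma psdBc : psd ip (compl_op B) (1 - Fmin m M).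
Proof.
split.
- exact (lin_compl Hip (lin_comp Hip lA (lin_compl Hip lA))).
- exact (rsa_compl Hip (lin_comp Hip lA (lin_compl Hip lA)) (rsa_Acompl Hip lA sA)).
- have := Fmin_le_Fmax m_le_M; have := Fmax_le1'; lra.
- move=> x; rewrite {1 3}/compl_op /= (rpBl Hip).
  have := qB_up x; have := qB_lo x; have := rp_ge0 Hip x; have := Fmax_le1'.
  rewrite /= => h1 h2 h3 h4; apply/andP; split; nra.
Qed.

Lemma bb_ge1 : 1 <= N B + N (compl_op B).
Proof.
have h1 := psd_q_le Hip psdB e; have h2 := psd_q_le Hip psdBc e.
rewrite he mulr1 in h1; rewrite he mulr1 /compl_op /= (rpBl Hip) he in h2.
lra.
Qed.

Lemma S1_ge : (M - m) - (Fmax m M - Fmin m M) <= S1 ip A.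
Proof.
have h1 := psd_norm_le Hip psdB; have h2 := psd_norm_le Hip psdBc.
rewrite /S1; lra.
Qed.

Lemma S1_le : S1 ip A <= M - m.
Proof. have := bb_ge1; rewrite /S1; lra. Qed.

Lemma S1_range : 0 <= S1 ip A <= 1.
Proof.
apply/andP; split.
  apply: le_trans S1_ge; rewrite subr_ge0.
  by apply: Fgap_le; [exact: m_ge0|exact: m_le_M|exact: M_le1].
apply: le_trans S1_le _; have := m_ge0; have := M_le1; lra.
Qed.

Lemma S1_zero : S1 ip A = 0 -> 0 <= M <= 1 /\ A = (fun x => sc M x).
Proof.
move=> h0.
have emM : m = M.
  apply/eqP; rewrite eq_le m_le_M /= leNgt; apply/negP => hlt.
  have := Fgap m_ge0 hlt M_le1; have := S1_ge; rewrite h0; lra.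
have M0 : 0 <= M by rewrite -emM m_ge0.
split; first by rewrite M0 M_le1.
apply: funext => x.
have hP := psd_P; rewrite emM subrr in hP.
have := psd_sq Hip hP x; rewrite mul0r => h.
have : rp (A x - sc M x) (A x - sc M x) = 0.
  by apply/eqP; rewrite eq_le h rp_ge0.
by move/(rp_eq0 Hip)/eqP; rewrite subr_eq0 => /eqP.
Qed.

Lemma S1_scal l : (forall x, A x = sc l x) -> S1 ip A <= 0.
Proof.
move=> hl.
have el : rp (A e) e = l by rewrite hl (rpZl Hip) he mulr1.
have l0 : 0 <= l by case: pA => _ _ _ /(_ e) /andP[]; rewrite el.
have l1 : l <= 1 by case: pA => _ _ _ /(_ e) /andP[_]; rewrite el he mulr1.
have pl : psd ip A l.
  by apply: (psd_relax pA l0) => x; rewrite hl (rpZl Hip).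
have h1 : M <= l := psd_norm_le Hip pl.
have l1' : 0 <= 1 - l by lra.
have pl' : psd ip (compl_op A) (1 - l).
  apply: (psd_relax (psd_compl pA) l1').
  by move=> x; rewrite /compl_op /= (rpBl Hip) hl (rpZl Hip) mulrBl mul1r.
have h2 : N (compl_op A) <= 1 - l := psd_norm_le Hip pl'.
have := S1_le; lra.
Qed.

Lemma S1_one : S1 ip A = 1 -> A \o A = A /\ A <> @Oop R H /\ A <> @Iop R H.
Proof.
move=> h1.
have hMm := S1_le; have hM1 := M_le1; have hm0 := m_ge0.
have eM : M = 1 by lra.
have ea : N (compl_op A) = 1 by lra.
have hbb : N B + N (compl_op B) = 1 by move: h1; rewrite /S1 eM ea; lra.
have hb'0 : 0 <= N (compl_op B) := opnorm_ge0 Hip (psd_bounded Hip psdBc).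
have pab : psd ip (compl_op A) (N (compl_op B)).
  apply: (psd_relax (psd_compl pA) hb'0) => x.
  have := psd_q_le Hip psdBc x; rewrite /compl_op /= !(rpBl Hip) qB.
  have := rp_ge0 Hip (A x); lra.
have ab : N (compl_op A) <= N (compl_op B) := psd_norm_le Hip pab.
have hb0 : N B <= 0 by lra.
have pB0 : psd ip B 0.
  apply: (psd_relax psdB) => // x; rewrite mul0r.
  have := psd_q_le Hip psdB x; have := rp_ge0 Hip x; nra.
split; last split.
- apply: funext => x /=.
  have := psd_sq Hip pB0 x; rewrite mul0r => h.
  have : rp (B x) (B x) = 0 by apply/eqP; rewrite eq_le h rp_ge0.
  move/(rp_eq0 Hip); rewrite /compl_op /= (linB Hip lA) => /eqP; rewrite subr_eq0.
  by move/eqP.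
- move=> hO; have : M <= 0.
    apply: (opnorm_le Hip) => // x; by rewrite hO /Oop (hn0 Hip) mul0r.
  lra.
- move=> hI; have : N (compl_op A) <= 0.
    apply: (opnorm_le Hip) => // x; by rewrite hI /compl_op /Iop subrr (hn0 Hip) mul0r.
  lra.
Qed.

Lemma S1_proj : A \o A = A -> A <> @Oop R H -> A <> @Iop R H -> 1 <= S1 ip A.
Proof.
move=> hAA hO hI.
have eAA x : A (A x) = A x by have := congr1 (fun f => f x) hAA.
have hb : N B <= 0.
  apply: (opnorm_le Hip) => // x; rewrite /compl_op /= (linB Hip lA) eAA subrr (hn0 Hip) mul0r //.
have hb' : N (compl_op B) <= 1.
  apply: le_trans (psd_norm_le Hip psdBc) _; have := Fmin_ge0'; lra.
have pos y : y <> 0 -> 0 < rp y y.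
  move=> yn; rewrite lt_def (rp_ge0 Hip) andbT; apply/eqP => /(rp_eq0 Hip); exact: yn.
have ha : 1 <= M.
  have [x hx] : exists x, A x <> 0.
    apply: contrapT => hn; apply: hO; apply: funext => x.
    by apply: contrapT => hx; apply: hn; exists x.
  have := qA_up (A x); rewrite eAA => h.
  have := pos _ hx; rewrite -[1 <= M](ler_pM2r (pos _ hx)) mul1r.
  by move=> _; exact: h.
have ha' : 1 <= N (compl_op A).
  have [x hx] : exists x, A x <> x.
    apply: contrapT => hn; apply: hI; apply: funext => x.
    by apply: contrapT => hx; apply: hn; exists x.
  set z := x - A x.
  have zn : z <> 0 by move/eqP; rewrite subr_eq0 eq_sym => /eqP.
  have hz : compl_op A z = z by rewrite /compl_op /z (linB Hip lA) eAA subrr subr0.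
  have := psd_q_le Hip (psd_compl pA) z; rewrite hz => h.
  by rewrite -(ler_pM2r (pos _ zn)) mul1r.
rewrite /S1; lra.
Qed.

End Fixed.
End Eff.
Set Default Proof Using "Type".
Lemma grp4 (V : zmodType) (a b c d : V) : (a - b) - (c - d) = (a - c) - (b - d).
Proof. by rewrite !opprB addrACA [RHS]addrACA (addrC (- b)). Qed.
Lemma grp3 (V : zmodType) (x a b : V) : (x - a) - (x - b) = - (a - b).
Proof. by rewrite opprB addrC addrA subrK opprB. Qed.

Lemma bern (R : realType) (h : R) n : 0 <= h -> 1 + n%:R * h <= (1 + h) ^+ n.
Proof.
move=> h0; elim: n => [|n IH]; first by rewrite mul0r addr0 expr0.
rewrite exprS -natr1; have := IH; have : 0 <= n%:R * h by rewrite mulr_ge0.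
nra.
Qed.

Lemma pow_lemma (R : realType) (x y K : R) : 0 <= x -> 0 <= y -> 0 <= K ->
  (forall k, x ^+ (2 ^ k) <= K * y ^+ (2 ^ k)) -> x <= y.
Proof.
move=> x0 y0 K0 h; rewrite leNgt; apply/negP => yx.
case: (eqVneq y 0) => [y00|yn0].
  by have := h 0%N; rewrite expn0 !expr1 y00 mulr0 => hx; move: yx; rewrite y00 ltNge hx.
have yp : 0 < y by rewrite lt_def yn0 y0.
set r := x / y.
have r1 : 1 < r by rewrite /r ltr_pdivlMr // mul1r.
have ex : x = r * y by rewrite /r divfK.
have hr k : r ^+ (2 ^ k) <= K.
  rewrite -(ler_pM2r (exprn_gt0 (2 ^ k) yp)); have := h k; rewrite ex exprMn.
  by [].
set c := K / (r - 1).
have c0 : 0 <= c by rewrite /c divr_ge0 // subr_ge0 ltW.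
have := archi_boundP c0; set n := Num.Def.archi_bound c => hn.
have hn2 : (n < 2 ^ n)%N by apply: ltn_expl.
have rr : 0 < r - 1 by rewrite subr_gt0.
have hb : 1 + (2 ^ n)%:R * (r - 1) <= r ^+ (2 ^ n).
  by have := @bern R (r - 1) (2 ^ n) (ltW rr); rewrite [1 + (r - 1)]addrC subrK.
have h3 := hr n.
have h2 : n%:R <= (2 ^ n)%:R :> R by rewrite ler_nat ltnW.
have ecK : c * (r - 1) = K by rewrite /c divfK // subr_eq0 gt_eqF.
move: hn; rewrite -(ltr_pM2r rr) ecK => hn.
have : (n%:R : R) * (r - 1) <= (2 ^ n)%:R * (r - 1) by rewrite ler_pM2r.
lra.
Qed.

Section Sim.
Variables (R : realType) (H : lmodType R[i]) (ip : H -> H -> R[i]).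
Hypothesis Hip : is_inner_product ip.
Set Default Proof Using "Hip".
Local Notation rp x y := (complex.Re (ip x y)).
Local Notation sc t x := (((t%:C)%C : R[i]) *: x).
Local Notation hn := (hnorm ip).
Local Notation N := (opnorm ip).

Lemma bounded_comp (S T : H -> H) : is_bounded_op ip S -> is_bounded_op ip T ->
  is_bounded_op ip (S \o T).
Proof.
move=> hS hT; split; first exact (lin_comp Hip hS.1 hT.1).
exists (N S * N T) => x /=.
apply: le_trans (opnorm_ub Hip hS (T x)) _; rewrite -mulrA ler_wpM2l //.
  exact (opnorm_ge0 Hip hS).
exact: (opnorm_ub Hip).
Qed.

Lemma bounded_compl (T : H -> H) : is_bounded_op ip T -> is_bounded_op ip (compl_op T).
Proof.
move=> hT; split; first exact (lin_compl Hip hT.1).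
exists (1 + N T) => x; rewrite /compl_op mulrDl mul1r.
apply: le_trans (hnB Hip x (T x)) _; rewrite lerD2l; exact: opnorm_ub.
Qed.

Lemma lin_iter (T : H -> H) n : is_linear_op T -> is_linear_op (iter n T).
Proof.
move=> lT; elim: n => [|n IH] a x y //=.
by rewrite IH lT.
Qed.

Lemma rsa_iter (T : H -> H) n : rsa ip T -> rsa ip (iter n T).
Proof.
move=> sT; elim: n => [|n IH] x y //=.
by rewrite sT IH -iterSr.
Qed.

Lemma hn_iter (T : H -> H) n : is_bounded_op ip T ->
  forall x, hn (iter n T x) <= N T ^+ n * hn x.
Proof.
move=> bT; elim: n => [|n IH] x; first by rewrite expr0 mul1r.
rewrite /= exprS -mulrA; apply: le_trans (opnorm_ub Hip bT _) _.
by rewrite ler_wpM2l // (opnorm_ge0 Hip bT).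
Qed.

Lemma bounded_iter (T : H -> H) n : is_bounded_op ip T -> is_bounded_op ip (iter n T).
Proof.
move=> bT; split; first exact (lin_iter n bT.1).
by exists (N T ^+ n); apply: hn_iter.
Qed.

Lemma N_sq (T : H -> H) : is_bounded_op ip T -> rsa ip T ->
  N T ^+ 2 <= N (T \o T).
Proof.
move=> bT sT; have bTT := bounded_comp bT bT.
have N0 := opnorm_ge0 Hip bTT.
have h : N T <= Num.sqrt (N (T \o T)).
  apply: (opnorm_le Hip); first exact: sqrtr_ge0.
  move=> x; apply: (hn_le Hip); first exact: sqrtr_ge0.
  rewrite sqr_sqrtr // -(sT (T x) x).
  apply: le_trans (CSn Hip _ _) _.
  rewrite -(hn_sqr Hip) expr2 mulrA ler_wpM2r ?hn_ge0 //.
  exact: (opnorm_ub Hip bTT).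
have hN0 := opnorm_ge0 Hip bT.
rewrite -(sqr_sqrtr N0) !expr2; exact (ler_pM hN0 hN0 h h).
Qed.

Lemma N_pow2 (T : H -> H) : is_bounded_op ip T -> rsa ip T ->
  forall k, N T ^+ (2 ^ k) <= N (iter (2 ^ k) T).
Proof.
move=> bT sT; elim=> [|k IH].
  rewrite expn0 expr1; have -> : iter 1 T = T by apply: funext.
  by [].
have e1 : iter (2 ^ k.+1) T = (iter (2 ^ k) T) \o (iter (2 ^ k) T).
  by apply: funext => x /=; rewrite expnS mul2n -addnn iterD.
rewrite e1 expnS mulnC exprM.
have bS := bounded_iter (2 ^ k) bT.
apply: le_trans (N_sq bS (rsa_iter _ sT)).
have := exprn_ge0 (2 ^ k) (opnorm_ge0 Hip bT); nra.
Qed.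

Lemma sim_le (T T' C D : H -> H) :
  is_bounded_op ip T -> rsa ip T -> is_bounded_op ip T' -> rsa ip T' ->
  is_bounded_op ip C -> is_bounded_op ip D ->
  (forall x, D (C x) = x) -> (forall x, C (D x) = x) ->
  (forall x, T' x = C (T (D x))) -> N T' <= N T.
Proof.
move=> bT sT bT' sT' bC bD DC CD hT'.
have eit n x : iter n T' x = C (iter n T (D x)).
  elim: n x => [|n IH] x /=; first by rewrite CD.
  by rewrite IH hT' DC.
have NC := opnorm_ge0 Hip bC; have ND := opnorm_ge0 Hip bD.
have NT := opnorm_ge0 Hip bT.
apply: (pow_lemma (K := N C * N D)).
- exact (opnorm_ge0 Hip bT').
- exact: NT.
- exact: mulr_ge0.
move=> k; apply: le_trans (N_pow2 bT' sT' k) _.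
apply: (opnorm_le Hip); first by rewrite !mulr_ge0 // exprn_ge0.
move=> x; rewrite eit.
apply: le_trans (opnorm_ub Hip bC _) _.
have h1 := hn_iter (2 ^ k) bT (D x).
have h2 := opnorm_ub Hip bD x.
have h3 := hn_ge0 Hip (D x); have h4 := hn_ge0 Hip x.
have h5 := exprn_ge0 (2 ^ k) NT.
set a := N T ^+ (2 ^ k) in h1 h5 *.
set u := hn (iter _ _ _) in h1 *.
have : N C * u <= N C * (a * hn (D x)) by rewrite ler_wpM2l.
have : a * hn (D x) <= a * (N D * hn x) by rewrite ler_wpM2l.
have : N C * (a * hn (D x)) <= N C * (a * (N D * hn x)).
  by rewrite ler_wpM2l // ler_wpM2l.
nra.
Qed.

Lemma sim_eq (T T' C D : H -> H) :
  is_bounded_op ip T -> rsa ip T -> is_bounded_op ip T' -> rsa ip T' ->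
  is_bounded_op ip C -> is_bounded_op ip D ->
  (forall x, D (C x) = x) -> (forall x, C (D x) = x) ->
  (forall x, T' x = C (T (D x))) -> N T' = N T.
Proof.
move=> bT sT bT' sT' bC bD DC CD hT'; apply/eqP; rewrite eq_le.
rewrite (sim_le bT sT bT' sT' bC bD DC CD hT') /=.
apply: (sim_le bT' sT' bT sT bD bC CD DC) => x.
by rewrite hT' !DC.
Qed.

End Sim.
Section Main.
Variables (R : realType) (H : lmodType R[i]) (ip : H -> H -> R[i]).
Hypothesis Hip : is_inner_product ip.
Set Default Proof Using "Hip".
Local Notation rp x y := (complex.Re (ip x y)).
Local Notation sc t x := (((t%:C)%C : R[i]) *: x).
Local Notation hn := (hnorm ip).
Local Notation N := (opnorm ip).

Lemma lip (T1 T2 : H -> H) c : is_bounded_op ip T1 -> is_bounded_op ip T2 -> 0 <= c ->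
  (forall x, hn (T1 x - T2 x) <= c * hn x) -> `|N T1 - N T2| <= c.
Proof.
move=> b1 b2 c0 h.
have N1 := opnorm_ge0 Hip b1; have N2 := opnorm_ge0 Hip b2.
have l1 : N T1 <= N T2 + c.
  apply: (opnorm_le Hip); first by rewrite addr_ge0.
  move=> x; have -> : T1 x = T2 x + (T1 x - T2 x) by rewrite addrC subrK.
  apply: le_trans (hnD Hip _ _) _; rewrite mulrDl lerD //; exact: (opnorm_ub Hip).
have l2 : N T2 <= N T1 + c.
  apply: (opnorm_le Hip); first by rewrite addr_ge0.
  move=> x; have -> : T2 x = T1 x - (T1 x - T2 x) by rewrite opprB addrC subrK.
  apply: le_trans (hnB Hip _ _) _; rewrite mulrDl lerD //; exact: (opnorm_ub Hip).
rewrite ler_norml; apply/andP; split; lra.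
Qed.

Lemma effect_bounded (A : H -> H) : effect ip A -> is_bounded_op ip A.
Proof. by case=> [[]]. Qed.

Lemma S6_lemma (A B : H -> H) : effect ip A -> effect ip B ->
  `|S1 ip A - S1 ip B| <= 8 * N (sub_op A B).
Proof.
move=> eA eB.
have pA := effect_psd Hip eA; have pB := effect_psd Hip eB.
have bA := psd_bounded Hip pA; have bB := psd_bounded Hip pB.
have lA := bA.1; have lB := bB.1.
have NA := psd_norm_le Hip pA; have NB := psd_norm_le Hip pB.
have NB0 := opnorm_ge0 Hip bB.
set Dl := sub_op A B.
have bD : is_bounded_op ip Dl.
  split.
    move=> a x y; rewrite /Dl /sub_op lA lB scalerBr opprD addrACA.
    by [].
  exists (N A + N B) => x; rewrite /Dl /sub_op mulrDl.
  apply: le_trans (hnB Hip _ _) _; rewrite lerD //; exact: (opnorm_ub Hip).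
have d0 := opnorm_ge0 Hip bD.
have hD x : hn (A x - B x) <= N Dl * hn x := opnorm_ub Hip bD x.
have e1 : `|N A - N B| <= N Dl by apply: lip.
have e2 : `|N (compl_op A) - N (compl_op B)| <= N Dl.
  apply: lip => //; try exact: bounded_compl.
  by move=> x; rewrite /compl_op grp3 (hnN Hip).
have bBA := bounded_comp Hip bA (bounded_compl Hip bA).
have bBB := bounded_comp Hip bB (bounded_compl Hip bB).
have key x : hn ((A \o compl_op A) x - (B \o compl_op B) x) <= 3 * N Dl * hn x.
  rewrite /compl_op /= (linB Hip lA) (linB Hip lB) grp4.
  have -> : A (A x) - B (B x) = A (A x - B x) + (A (B x) - B (B x)).
    by rewrite (linB Hip lA) addrA subrK.
  apply: le_trans (hnB Hip _ _) _.
  have h1 := hD x.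
  have h2 := opnorm_ub Hip bA (A x - B x).
  have h3 := hD (B x).
  have h4 := opnorm_ub Hip bB x.
  have h5 := hnD Hip (A (A x - B x)) (A (B x) - B (B x)).
  have h6 := hn_ge0 Hip x; have h7 := hn_ge0 Hip (A x - B x).
  have h8 := hn_ge0 Hip (B x).
  have h9 : N A * hn (A x - B x) <= 1 * (N Dl * hn x).
    apply: ler_pM => //; exact: (opnorm_ge0 Hip bA).
  have h10 : N Dl * hn (B x) <= N Dl * (1 * hn x).
    rewrite ler_wpM2l //; apply: le_trans h4 _; rewrite ler_wpM2r //.
  nra.
have e3 : `|N (A \o compl_op A) - N (B \o compl_op B)| <= 3 * N Dl.
  by apply: lip => //; rewrite mulr_ge0.
have e4 : `|N (compl_op (A \o compl_op A)) - N (compl_op (B \o compl_op B))| <= 3 * N Dl.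
  apply: lip => //; try exact: bounded_compl; first by rewrite mulr_ge0.
  move=> x; rewrite {1}/compl_op {1}/compl_op grp3 (hnN Hip); exact: key.
move: e1 e2 e3 e4; rewrite /S1 !ler_norml.
move=> /andP[a1 a2] /andP[b1 b2] /andP[c1 c2] /andP[d1 d2].
apply/andP; split; lra.
Qed.

End Main.
Section Final.
Variables (R : realType) (H : lmodType R[i]) (ip : H -> H -> R[i]).
Hypothesis Hip : is_inner_product ip.
Set Default Proof Using "Hip".
Local Notation rp x y := (complex.Re (ip x y)).
Local Notation sc t x := (((t%:C)%C : R[i]) *: x).
Local Notation hn := (hnorm ip).
Local Notation N := (opnorm ip).

Lemma unit_or_triv : (exists e, rp e e = 1) \/ (forall x : H, x = 0).
Proof.
case: (pselect (exists x : H, x <> 0)) => [[x hx]|hn0]; last first.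
  by right => x; apply: contrapT => hx; apply: hn0; exists x.
left; exists (sc (hn x)^-1 x).
have hp : 0 < hn x.
  rewrite lt_def (hn_ge0 Hip) andbT; apply/eqP => /(hn_eq0 Hip); exact: hx.
rewrite -(hn_sqr Hip) hnZ // ger0_norm ?invr_ge0 ?hn_ge0 // mulVf ?gt_eqF //.
by rewrite expr1n.
Qed.

Lemma S1_triv (A : H -> H) : (forall x : H, x = 0) -> S1 ip A = 0.
Proof. by move=> ht; rewrite /S1 !triv_N // subrr. Qed.

Lemma S4_lemma (A : H -> H) : effect ip A -> S1 ip (compl_op A) = S1 ip A.
Proof.
move=> eA; have lA := (effect_bounded Hip eA).1.
have e1 : compl_op (compl_op A) = A.
  by apply: funext => x; rewrite /compl_op opprB addrC subrK.
have e2 : compl_op A \o A = A \o compl_op A.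
  by apply: funext => x; rewrite /compl_op /= (linB Hip lA).
rewrite /S1 e1 e2; lra.
Qed.

Lemma S5_lemma (A C D : H -> H) : effect ip A -> invertible_bounded ip C D ->
  effect ip (C \o A \o D) -> S1 ip (C \o A \o D) = S1 ip A.
Proof.
move=> eA [bC bD CD DC] eA'.
set A' := C \o A \o D.
have bA := effect_bounded Hip eA; have bA' := effect_bounded Hip eA'.
have sA : rsa ip A by case: (effect_psd Hip eA).
have sA' : rsa ip A' by case: (effect_psd Hip eA').
have lA := bA.1; have lA' := bA'.1; have lC := bC.1.
have E1 : N A' = N A.
  by apply: (sim_eq Hip bA sA bA' sA' bC bD DC CD).
have E2 : N (compl_op A') = N (compl_op A).
  apply: (sim_eq Hip (bounded_compl Hip bA) (rsa_compl Hip lA sA)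
    (bounded_compl Hip bA') (rsa_compl Hip lA' sA') bC bD DC CD) => x.
  by rewrite /compl_op /A' /= (linB Hip lC) CD.
have hB x : (A' \o compl_op A') x = C ((A \o compl_op A) (D x)).
  by rewrite /compl_op /A' /= (linB Hip bD.1) DC.
have E3 : N (A' \o compl_op A') = N (A \o compl_op A).
  apply: (sim_eq Hip (bounded_comp Hip bA (bounded_compl Hip bA))
    (rsa_Acompl Hip lA sA)
    (bounded_comp Hip bA' (bounded_compl Hip bA')) (rsa_Acompl Hip lA' sA')
    bC bD DC CD) => x.
  exact: hB.
have E4 : N (compl_op (A' \o compl_op A')) = N (compl_op (A \o compl_op A)).
  have lB := lin_comp Hip lA (lin_compl Hip lA).
  have lB' := lin_comp Hip lA' (lin_compl Hip lA').
  apply: (sim_eq Hip (bounded_compl Hip (bounded_comp Hip bA (bounded_compl Hip bA)))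
    (rsa_compl Hip lB (rsa_Acompl Hip lA sA))
    (bounded_compl Hip (bounded_comp Hip bA' (bounded_compl Hip bA')))
    (rsa_compl Hip lB' (rsa_Acompl Hip lA' sA'))
    bC bD DC CD) => x.
  by rewrite {1}/compl_op hB (linB Hip lC) CD.
by rewrite /S1 E1 E2 E3 E4.
Qed.

End Final.
Set Default Proof Using "Type".

Theorem mainTheorem10 (R : realType) (H : lmodType R[i]) (ip : H -> H -> R[i])
  (Hip : is_inner_product ip) (Hcomp : hcomplete ip) (Hsep : hseparable ip) :
  sharpness_measure ip (S1 ip).
Proof.
split; [|split; [|split; [|split; [|split]]]].
- move=> A eA; case: (unit_or_triv Hip) => [[e he]|ht].
    exact (S1_range Hip (effect_psd Hip eA) he).
  by rewrite S1_triv // lexx ler01.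
- move=> A eA; have pA := effect_psd Hip eA.
  case: (unit_or_triv Hip) => [[e he]|ht]; split.
  + move=> h0; have [hM ->] := S1_zero Hip pA he h0.
    by exists (opnorm ip A).
  + case=> l [hl eAl].
    apply/eqP; rewrite eq_le; have /andP[-> _] := S1_range Hip pA he.
    by rewrite (S1_scal Hip pA he (l := l)) // eAl.
  + move=> _; exists 0; split; first by rewrite lexx ler01.
    by apply: funext => x; rewrite (ht (A x)) (ht x) scaler0.
  + by move=> _; rewrite S1_triv.
- move=> A eA; have pA := effect_psd Hip eA.
  case: (unit_or_triv Hip) => [[e he]|ht]; split.
  + move=> h1; have [hAA [hO hI]] := S1_one Hip pA he h1.
    by split => //; split => //; case: eA.
  + case=> [[sa hAA] [hO hI]].
    apply/eqP; rewrite eq_le; have /andP[_ ->] := S1_range Hip pA he.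
    exact (S1_proj Hip pA he hAA hO hI).
  + by rewrite S1_triv // => /eqP; rewrite eq_sym oner_eq0.
  + case=> _ [hO _]; exfalso; apply: hO; apply: funext => x.
    by rewrite (ht (A x)).
- move=> A eA; exact (S4_lemma Hip eA).
- move=> A C D eA hCD eA'; exact (S5_lemma Hip eA hCD eA').
- move=> A eA e e0; exists (e / 8); first by rewrite divr_gt0.
  move=> B eB hd; apply: le_lt_trans (S6_lemma Hip eA eB) _.
  by rewrite -ltr_pdivlMl // mulrC.
Qed.
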